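(* Let $\mathcal{H}$ be a complex Hilbert space, let $T\in\mathbb{B}(\mathcal{H})$ and let $N(\cdot)$ be an algebra norm on $\mathbb{B}(\mathcal{H})$. Then $$\frac{N\big(TT^* + T^*T\big)}{4} + \frac{1}{2}\sup_{\varphi \in \mathbb{R}}\Big|N^2\big({\rm Re}(e^{i\varphi}T)\big) - N^2\big({\rm Im}(e^{i\varphi}T)\big)\Big| \leq w^2_{N}(T).$$
   Context: $\mathbb{B}(\mathcal{H})$ is the algebra of bounded linear operators on $\mathcal{H}$. A norm $N(\cdot)$ on $\mathbb{B}(\mathcal{H})$ is an algebra norm if $N(TS)\le N(T)N(S)$ for all $T,S\in\mathbb{B}(\mathcal{H})$. For $A\in\mathbb{B}(\mathcal{H})$, ${\rm Re}(A)=\frac{A+A^*}{2}$ and ${\rm Im}(A)=\frac{A-A^*}{2i}$. The generalized numerical radius is $w_N(T)=\sup_{\theta\in\mathbb{R}} N\big({\rm Re}(e^{i\theta}T)\big)$. *)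

(* Defs.v *)
From HB Require Import structures.
From mathcomp Require Import all_boot all_order all_algebra.
From mathcomp Require Import all_classical all_reals all_analysis.
From mathcomp Require Import complex.
Import Order.TTheory GRing.Theory Num.Theory ComplexField.
Set Implicit Arguments. Unset Strict Implicit. Unset Printing Implicit Defensive.
Local Open Scope ring_scope.
Local Open Scope complex_scope.
Local Open Scope classical_set_scope.

(* A complex Hilbert space is a
   complete normed R[i]-module H whose norm is induced by an inner product
   ip (linear in the first argument, conjugate symmetric). *)
Definition is_inner_product (R : realType) (H : normedModType R[i])
  (ip : H -> H -> R[i]) : Prop :=
  [/\ (forall (a : R[i]) (x y z : H), ip (a *: x + y) z = a * ip x z + ip y z),
      (forall x y : H, ip y x = (ip x y)^*) &
      (forall x : H, `|x| ^+ 2 = ip x x)].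

(* T belongs to B(H): T is linear and continuous (= bounded). *)
Definition bounded_op (R : realType) (H : normedModType R[i]) (T : H -> H) : Prop :=
  (forall (a : R[i]) (x y : H), T (a *: x + y) = a *: T x + T y) /\ continuous T.

Definition is_adjoint (R : realType) (H : normedModType R[i])
  (ip : H -> H -> R[i]) (T Ts : H -> H) : Prop :=
  forall x y : H, ip (T x) y = ip x (Ts y).

(* N is an algebra norm on B(H) (only its values on B(H) matter). *)
Definition algebra_norm (R : realType) (H : normedModType R[i])
  (N : (H -> H) -> R) : Prop :=
  [/\ (forall A, bounded_op A -> 0 <= N A),
      (forall A, bounded_op A -> N A = 0 -> A = (fun _ => 0)),
      (forall (a : R[i]) A, bounded_op A ->
          (N (fun x => a *: A x))%:C = `|a| * (N A)%:C),
      (forall A B, bounded_op A -> bounded_op B ->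
          N (fun x => A x + B x) <= N A + N B) &
      (forall A B, bounded_op A -> bounded_op B ->
          N (A \o B) <= N A * N B)].

Definition cexp (R : realType) (phi : R) : R[i] := (cos phi) +i* (sin phi).

(* Re(A) = (A + A^* )/2 and Im(A) = (A - A^* )/(2i), given A and its adjoint As. *)
Definition ReOp (R : realType) (H : normedModType R[i]) (A As : H -> H) : H -> H :=
  fun x => (2 : R[i])^-1 *: (A x + As x).
Definition ImOp (R : realType) (H : normedModType R[i]) (A As : H -> H) : H -> H :=
  fun x => (2 * 'i : R[i])^-1 *: (A x - As x).

(* e^{i phi} T, and its adjoint e^{-i phi} T^* = conj(e^{i phi}) T^* *)
Definition rotOp (R : realType) (H : normedModType R[i]) (phi : R) (T : H -> H) : H -> H :=
  fun x => cexp phi *: T x.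
Definition rotAdj (R : realType) (H : normedModType R[i]) (phi : R) (Ts : H -> H) : H -> H :=
  fun x => (cexp phi)^* *: Ts x.

Definition wN (R : realType) (H : normedModType R[i]) (N : (H -> H) -> R)
  (T Ts : H -> H) : R :=
  sup (range (fun theta : R => N (ReOp (rotOp theta T) (rotAdj theta Ts)))).

(* Main.v *)
Set Warnings "-all".
Require Import Defs.
From HB Require Import structures.
From mathcomp Require Import all_boot all_order all_algebra.
From mathcomp Require Import all_classical all_reals all_analysis.
From mathcomp Require Import complex.
From mathcomp Require Import ring lra.
Import Order.TTheory GRing.Theory Num.Theory ComplexField.
Import numFieldNormedType.Exports.
Local Open Scope ring_scope.
Local Open Scope complex_scope.
Local Open Scope classical_set_scope.
Set Implicit Arguments. Unset Strict Implicit.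

Section Lin.
Variables (R : realType) (H : normedModType R[i]).

Definition islin (A : H -> H) := forall (a : R[i]) (x y : H), A (a *: x + y) = a *: A x + A y.

Lemma lin0 A : islin A -> A 0 = 0.
Proof.
move=> hA; have := hA 1 0 0; rewrite !scale1r addr0 => h.
by apply: (addrI (A 0)); rewrite addr0 -h.
Qed.

Lemma linZ A : islin A -> forall a x, A (a *: x) = a *: A x.
Proof. by move=> hA a x; have := hA a x 0; rewrite !addr0 lin0 // addr0. Qed.

Lemma linD A : islin A -> forall x y, A (x + y) = A x + A y.
Proof. by move=> hA x y; have := hA 1 x y; rewrite !scale1r. Qed.

Lemma linN A : islin A -> forall x, A (- x) = - A x.
Proof. by move=> hA x; rewrite -scaleN1r linZ // scaleN1r. Qed.

Lemma linB A : islin A -> forall x y, A (x - y) = A x - A y.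
Proof. by move=> hA x y; rewrite linD // linN. Qed.

Lemma cont_bound A : islin A -> continuous A ->
  exists C : R[i], 0 < C /\ forall x, `|A x| <= C * `|x|.
Proof.
move=> hA cA.
have h0 : A x @[x --> (0:H)] --> (0:H) by rewrite -{2}(lin0 hA); exact: cA.
have := cvgr0_norm_lt _ h0 _ ltr01.
move=> hn; have [e /= e0 He] := (nbhs_norm0P (P := fun x : H => `|A x| < 1)).1 (hn (nbhs_filter _)).
exists (2 / e); split; first by rewrite divr_gt0.
move=> x; have [->|x0] := eqVneq x 0; first by rewrite lin0 // normr0 mulr0.
have nx : 0 < `|x| by rewrite normr_gt0.
pose k : R[i] := e / (2 * `|x|).
have k0 : 0 < k by rewrite divr_gt0 // mulr_gt0.
have : `|k *: x| < e.
  rewrite normrZ (gtr0_norm k0) /k invfM.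
  have -> : e * (2^-1 * `|x|^-1) * `|x| = e / 2 by field; rewrite gt_eqF.
  by rewrite gtr_pMr // invf_lt1 // ltr1n.
move=> /He; rewrite linZ // normrZ (gtr0_norm k0) /k.
rewrite -ltr_pdivlMl ?divr_gt0 ?mulr_gt0 // invf_div mulr1.
by move/ltW; rewrite mulrAC.
Qed.

Lemma bound_cont A : islin A -> (exists C : R[i], 0 < C /\ forall x, `|A x| <= C * `|x|) ->
  continuous A.
Proof.
move=> hA [C [C0 hC]] x; apply/cvgrPdist_lt => eps eps0.
apply/nbhs_normP; exists (eps / C); first by rewrite /= divr_gt0.
move=> y /=; rewrite -linB //.
move=> hy; apply: (le_lt_trans (hC _)).
by rewrite -ltr_pdivlMl // mulrC.
Qed.


Local Notation bo := (@bounded_op R H).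

Lemma bo_add A B : bo A -> bo B -> bo (fun x => A x + B x).
Proof.
move=> [lA cA] [lB cB]; split.
  by move=> a x y; rewrite lA lB scalerDr addrACA.
by move=> x; exact: (continuousD (cA x) (cB x)).
Qed.

Lemma bo_opp A : bo A -> bo (fun x => - A x).
Proof.
move=> [lA cA]; split.
  by move=> a x y; rewrite lA opprD scalerN.
by move=> x; exact: (continuousN (cA x)).
Qed.

Lemma bo_sub A B : bo A -> bo B -> bo (fun x => A x - B x).
Proof. by move=> hA hB; apply: bo_add => //; apply: bo_opp. Qed.

Lemma bo_scale (k : R[i]) A : bo A -> bo (fun x => k *: A x).
Proof.
move=> [lA cA].
have lk : islin (fun x => k *: A x).
  by move=> a x y; rewrite lA scalerDr !scalerA mulrC.
split => //; apply: bound_cont => //.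
have [C [C0 hC]] := cont_bound lA cA.
exists ((`|k| + 1) * C); split; first by rewrite mulr_gt0 // ltr_wpDl.
move=> x; rewrite normrZ -mulrA; apply: ler_pM => //.
  by rewrite lerDl.
Qed.

Lemma bo_comp A B : bo A -> bo B -> bo (fun x => A (B x)).
Proof.
move=> [lA cA] [lB cB]; split.
  by move=> a x y; rewrite lB lA.
by move=> x; apply: (continuous_comp (cB x) (cA (B x))).
Qed.

Variable ip : H -> H -> R[i].
Hypothesis hip : is_inner_product ip.

Lemma ip0l z : ip 0 z = 0.
Proof.
case: hip => h _ _; have := h 1 0 0 z; rewrite scale1r addr0 mul1r => e.
by apply: (addrI (ip 0 z)); rewrite addr0 -e.
Qed.

Lemma ipZl a x z : ip (a *: x) z = a * ip x z.
Proof. by case: hip => h _ _; have := h a x 0 z; rewrite addr0 ip0l addr0. Qed.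

Lemma ipDl x y z : ip (x + y) z = ip x z + ip y z.
Proof. by case: hip => h _ _; have := h 1 x y z; rewrite scale1r mul1r. Qed.

Lemma ipC x y : ip y x = (ip x y)^*.
Proof. by case: hip. Qed.

Lemma ipZr a x z : ip x (a *: z) = a^* * ip x z.
Proof. by rewrite ipC ipZl rmorphM /= -!ipC. Qed.

Lemma ipDr x y z : ip z (x + y) = ip z x + ip z y.
Proof. by rewrite ipC ipDl rmorphD /= -!ipC. Qed.

Lemma ipNr x z : ip z (- x) = - ip z x.
Proof. by rewrite -scaleN1r ipZr rmorphN rmorph1 mulN1r. Qed.

Lemma ipBr x y z : ip z (x - y) = ip z x - ip z y.
Proof. by rewrite ipDr ipNr. Qed.

Lemma ipNl x z : ip (- x) z = - ip x z.
Proof. by rewrite -scaleN1r ipZl mulN1r. Qed.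

Lemma ipBl x y z : ip (x - y) z = ip x z - ip y z.
Proof. by rewrite ipDl ipNl. Qed.

Lemma ipn x : ip x x = `|x| ^+ 2.
Proof. by case: hip => _ _ ->. Qed.

Lemma ip_sep d : (forall z, ip z d = 0) -> d = 0.
Proof. by move=> h; have := h d; rewrite ipn => /eqP; rewrite expf_eq0 /= normr_eq0 => /eqP. Qed.

Variables T Ts : H -> H.
Hypothesis hT : bounded_op T.
Hypothesis hadj : is_adjoint ip T Ts.

Lemma cnj_real (r : R[i]) : r \is Num.real -> Num.conj r = r.
Proof. by move=> /RRe_real <-; exact: conjc_real. Qed.

Lemma cnjc_real (r : R[i]) : r \is Num.real -> conjc r = r.
Proof. by move=> /RRe_real <-; exact: conjc_real. Qed.

Lemma nrmC (x : H) : `|x| = (complex.Re `|x|)%:C.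
Proof. by rewrite RRe_real // normr_real. Qed.

Lemma Ts_lin : islin Ts.
Proof.
move=> a x y; apply/eqP; rewrite -subr_eq0; apply/eqP; apply: ip_sep => z.
rewrite ipBr -hadj ipDr ipZr !ipDr ipZr -!hadj.
by rewrite subrr.
Qed.

Lemma T_lin : islin T.
Proof. by case: hT. Qed.

Lemma Ts_bound : exists C : R[i], 0 < C /\ forall x, `|Ts x| <= C * `|x|.
Proof.
case: hT => lT cT; have [C [C0 hC]] := cont_bound lT cT.
exists C; split => // y.
pose u := Ts y.
have key : 0 <= `|C^-1 *: T u - C *: y| ^+ 2 by rewrite exprn_ge0.
have Cr : C \is Num.real by rewrite gtr0_real.
have Cc := cnj_real Cr.
rewrite -ipn !ipBl !ipBr !ipZl !ipZr in key.
have Cci : Num.conj C^-1 = C^-1 by apply: cnj_real; rewrite realV.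
rewrite Cc Cci (ipC (T u) y) (hadj u y) -/u !ipn cnjc_real ?rpredX ?normr_real // in key.
have := hC u.
have c0 : 0 < complex.Re C by move: C0; rewrite ltcE => /andP[_].
have a0 : 0 <= complex.Re `|T u| by have := normr_ge0 (T u); rewrite lecE => /andP[_].
have b0 : 0 <= complex.Re `|u| by have := normr_ge0 u; rewrite lecE => /andP[_].
have d0 : 0 <= complex.Re `|y| by have := normr_ge0 y; rewrite lecE => /andP[_].
rewrite -(RRe_real Cr) (nrmC (T u)) (nrmC u) (nrmC y) in key *.
move: (complex.Re C) (complex.Re `|T u|) (complex.Re `|u|) (complex.Re `|y|) c0 a0 b0 d0 key => c a b d c0 a0 b0 d0.
rewrite -!fmorphV -!rmorphXn -!rmorphM -!rmorphB ler0c => key.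
rewrite /= !lecR => hab.
have E : c^-1 * (c^-1 * a ^+ 2) - c^-1 * (c * b ^+ 2) - (c * (c^-1 * b ^+ 2) - c * (c * d ^+ 2))
  = (a / c) ^+ 2 - 2 * b ^+ 2 + (c * d) ^+ 2 by field; rewrite gt_eqF.
rewrite E in key.
have h1 : a / c <= b by rewrite ler_pdivrMr // mulrC.
have h2 : 0 <= a / c by rewrite divr_ge0 // ltW.
have h3 : (a / c) ^+ 2 <= b ^+ 2 by rewrite ler_pXn2r // nnegrE.
have h4 : b ^+ 2 <= (c * d) ^+ 2 by lra.
by rewrite -(ler_pXn2r (n := 2)) // nnegrE // mulr_ge0 // ltW.
Qed.

Lemma Ts_bo : bounded_op Ts.
Proof. by split; [exact: Ts_lin | apply: bound_cont; [exact: Ts_lin | exact: Ts_bound]]. Qed.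

End Lin.

Lemma coll (R : realType) (V : lmodType R[i]) (u v w z : V) (A B C D E F G K : R[i]) :
  (A*:u + B*:v + (C*:w + D*:z)) + (E*:u - F*:v - (G*:w - K*:z)) =
  (A+E)*:u + (B-F)*:v + ((C-G)*:w + (D+K)*:z).
Proof.
rewrite !scalerDl !scaleNr opprB (addrC (K*:z)) addrACA (addrACA (A*:u)) (addrACA (C*:w)).
by [].
Qed.

Lemma id4 (R : realType) (V : lmodType R[i]) (u v w z : V) (e f q : R[i]) :
  e * f = 1 -> q * q = - (2^-1 * 2^-1) ->
  v + w = 2 *: ( 2^-1 *: (e *: (2^-1 *: (e *: u + f *: v)) + f *: (2^-1 *: (e *: w + f *: z)))
   + q *: (e *: (q *: (e *: u - f *: v)) - f *: (q *: (e *: w - f *: z))) ).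
Proof.
move=> ef hq.
rewrite !scalerDr !scalerN !scalerA !scalerBr !scalerA coll.
have -> : 2 / 2 * e / 2 * e + 2 * (q * e * q * e) = 0.
  have -> : 2 / 2 * e / 2 * e + 2 * (q * e * q * e) = 2 * e * e * (2^-1 * 2^-1 + q * q) by ring.
  by rewrite hq subrr mulr0.
have -> : 2 / 2 * e / 2 * f - 2 * (q * e * q) * f = 1.
  have -> : 2 / 2 * e / 2 * f - 2 * (q * e * q) * f = 2 * (e * f) * (2^-1 * 2^-1 - q * q) by ring.
  by rewrite hq ef; field.
have -> : 2 / 2 * f / 2 * e - 2 * q * (f * q * e) = 1.
  have -> : 2 / 2 * f / 2 * e - 2 * q * (f * q * e) = 2 * (e * f) * (2^-1 * 2^-1 - q * q) by ring.
  by rewrite hq ef; field.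
have -> : 2 / 2 * f / 2 * f + 2 * q * (f * q * f) = 0.
  have -> : 2 / 2 * f / 2 * f + 2 * q * (f * q * f) = 2 * f * f * (2^-1 * 2^-1 + q * q) by ring.
  by rewrite hq subrr mulr0.
by rewrite !scale0r !scale1r add0r addr0.
Qed.

Section Main.
Variables (R : realType) (H : normedModType R[i]) (ip : H -> H -> R[i]) (N : (H -> H) -> R) (T Ts : H -> H).
Hypotheses (hip : is_inner_product ip) (hN : algebra_norm N) (hT : bounded_op T) (hadj : is_adjoint ip T Ts).
Local Notation bo := (@bounded_op R H).

Lemma hTs : bo Ts. Proof. exact: (Ts_bo hip hT hadj). Qed.

Lemma Nscale (a : R[i]) (r : R) A : bo A -> `|a| = r%:C -> N (fun x => a *: A x) = r * N A.
Proof. by case: hN => _ _ hs _ _ hA ea; apply: complexI; rewrite hs // ea rmorphM. Qed.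

Lemma Ntri A B : bo A -> bo B -> N (fun x => A x + B x) <= N A + N B.
Proof. by case: hN => _ _ _ ht _; exact: ht. Qed.

Lemma Nmul A B : bo A -> bo B -> N (fun x => A (B x)) <= N A * N B.
Proof. by case: hN => _ _ _ _ hm; exact: hm. Qed.

Lemma Nge0 A : bo A -> 0 <= N A.
Proof. by case: hN => h _ _ _ _; exact: h. Qed.

Lemma norm_cexp (phi : R) : `|cexp phi| = (1 : R)%:C.
Proof. by rewrite normc_def /= cos2Dsin2 sqrtr1. Qed.

Lemma norm_cexpc (phi : R) : `|Num.conj (cexp phi)| = (1 : R)%:C.
Proof. by rewrite normc_def /= sqrrN cos2Dsin2 sqrtr1. Qed.

Lemma norm_half : `|(2^-1 : R[i])| = (2^-1 : R)%:C.
Proof. by rewrite normfV normr_nat fmorphV rmorph_nat. Qed.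

Lemma norm_two : `|(2 : R[i])| = (2 : R)%:C.
Proof. by rewrite normr_nat rmorph_nat. Qed.

Definition Rp (phi : R) := ReOp (rotOp phi T) (rotAdj phi Ts).
Definition Ip (phi : R) := ImOp (rotOp phi T) (rotAdj phi Ts).

Lemma bo_rot (phi : R) : bo (rotOp phi T). Proof. exact: bo_scale. Qed.
Lemma bo_rotA (phi : R) : bo (rotAdj phi Ts). Proof. apply: bo_scale; exact: hTs. Qed.
Lemma bo_R (phi : R) : bo (Rp phi).
Proof. apply: bo_scale; apply: bo_add; [exact: bo_rot | exact: bo_rotA]. Qed.
Lemma bo_I (phi : R) : bo (Ip phi).
Proof. apply: bo_scale; apply: bo_sub; [exact: bo_rot | exact: bo_rotA]. Qed.

Lemma NR_le (phi : R) : N (Rp phi) <= 2^-1 * (N T + N Ts).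
Proof.
rewrite /Rp /ReOp (Nscale _ norm_half); last by apply: bo_add; [exact: bo_rot | exact: bo_rotA].
rewrite ler_pM2l ?invr_gt0 ?ltr0n //.
apply: le_trans (Ntri (bo_rot phi) (bo_rotA phi)) _.
rewrite /rotOp /rotAdj (Nscale _ (norm_cexp phi)) // (Nscale _ (norm_cexpc phi)) ?mul1r //.
exact: hTs.
Qed.

Lemma hub : has_ubound (range (fun theta : R => N (Rp theta))).
Proof. by exists (2^-1 * (N T + N Ts)) => _ [t _ <-]; exact: NR_le. Qed.

Lemma NR_w (phi : R) : N (Rp phi) <= wN N T Ts.
Proof. by apply: (ub_le_sup hub); exists phi. Qed.


Lemma inv2i : (2 * 'i : R[i])^-1 = - 'i / 2.
Proof. by apply/eqP; rewrite eq_complex /=; simpc; rewrite !expr2 !mul0r add0r addr0 eqxx. Qed.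

Lemma cexp_sh (phi : R) : cexp (phi - pi / 2) = - 'i * cexp phi.
Proof. by apply/eqP; rewrite eq_complex /= cosBpihalf sinBpihalf; simpc. Qed.

Lemma conj_mi (z : R[i]) : Num.conj (- 'i * z) = 'i * Num.conj z.
Proof. by change (conjc (- 'i * z) = 'i * conjc z); rewrite rmorphM rmorphN /=; congr (_ * _); apply/eqP; rewrite eq_complex /= !oppr0 opprK !eqxx. Qed.

Lemma NI_eq (phi : R) : N (Ip phi) = N (Rp (phi - pi / 2)).
Proof.
congr N; apply: funext => x.
rewrite /Ip /Rp /ImOp /ReOp /rotOp /rotAdj cexp_sh conj_mi.
rewrite inv2i mulrC -(scalerA (2^-1) (-'i)); congr (_ *: _).
by rewrite scalerBr -!scalerA !scaleNr opprK.
Qed.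


Lemma S_id (phi : R) : (fun x => T (Ts x) + Ts (T x)) =
  (fun x => 2 *: (Rp phi (Rp phi x) + Ip phi (Ip phi x))).
Proof.
have lT : islin T by case: hT.
have lTs := Ts_lin hip hadj.
apply: funext => x.
rewrite /Rp /Ip /ReOp /ImOp /rotOp /rotAdj.
rewrite !(linZ lT, linD lT, linN lT, linZ lTs, linD lTs, linN lTs).
have ef : cexp phi * conjc (cexp phi) = 1.
  by rewrite -sqr_normc norm_cexp expr1n.
have ii : 'i * 'i = -1 :> R[i] by rewrite -expr2 sqr_i.
have hq : (2 * 'i)^-1 * (2 * 'i)^-1 = - (2^-1 * 2^-1) :> R[i].
  by rewrite inv2i mulrACA mulrNN ii mulN1r.
exact: (id4 (T (T x)) (T (Ts x)) (Ts (T x)) (Ts (Ts x)) ef hq).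
Qed.

Lemma S_le (phi : R) : N (fun x => T (Ts x) + Ts (T x)) <=
  2 * (N (Rp phi) ^+ 2 + N (Ip phi) ^+ 2).
Proof.
have bRR : bo (fun x => Rp phi (Rp phi x)) by apply: bo_comp; exact: bo_R.
have bII : bo (fun x => Ip phi (Ip phi x)) by apply: bo_comp; exact: bo_I.
rewrite (S_id phi) (Nscale _ norm_two); last by apply: bo_add.
rewrite ler_pM2l ?ltr0n //.
apply: le_trans (Ntri bRR bII) _.
by rewrite !expr2; apply: lerD; apply: Nmul; (exact: bo_R || exact: bo_I).
Qed.


Lemma main_ineq :
  N (fun x => T (Ts x) + Ts (T x)) / 4
  + 2^-1 * sup (range (fun phi : R =>
       `| N (ReOp (rotOp phi T) (rotAdj phi Ts)) ^+ 2
          - N (ImOp (rotOp phi T) (rotAdj phi Ts)) ^+ 2 |))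
  <= wN N T Ts ^+ 2.
Proof.
set S := N (fun x => T (Ts x) + Ts (T x)).
set w := wN N T Ts.
have key : forall phi : R, `| N (Rp phi) ^+ 2 - N (Ip phi) ^+ 2 | <= 2 * (w ^+ 2 - S / 4).
  move=> phi.
  have ha : N (Rp phi) <= w by exact: NR_w.
  have hb : N (Ip phi) <= w by rewrite NI_eq; exact: NR_w.
  have a0 : 0 <= N (Rp phi) by apply: Nge0; exact: bo_R.
  have b0 : 0 <= N (Ip phi) by apply: Nge0; exact: bo_I.
  have hS : S <= 2 * (N (Rp phi) ^+ 2 + N (Ip phi) ^+ 2) by exact: S_le.
  move: ha hb a0 b0 hS; set a := N (Rp phi); set b := N (Ip phi) => ha hb a0 b0 hS.
  have ha2 : a ^+ 2 <= w ^+ 2 by rewrite ler_pXn2r // nnegrE; lra.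
  have hb2 : b ^+ 2 <= w ^+ 2 by rewrite ler_pXn2r // nnegrE; lra.
  rewrite ler_norml; apply/andP; split; lra.
have hsup : sup (range (fun phi : R => `| N (Rp phi) ^+ 2 - N (Ip phi) ^+ 2 |)) <= 2 * (w ^+ 2 - S / 4).
  apply: ge_sup; first by exists (`| N (Rp 0) ^+ 2 - N (Ip 0) ^+ 2 |), 0.
  by move=> _ [phi _ <-]; exact: key.
rewrite /Rp /Ip in hsup.
lra.
Qed.

End Main.

Theorem theorem2p3 (R : realType) (H : completeNormedModType R[i])
  (ip : H -> H -> R[i]) (N : (H -> H) -> R) (T Ts : H -> H) :
  is_inner_product ip -> algebra_norm N ->
  bounded_op T -> is_adjoint ip T Ts ->
  N (fun x => T (Ts x) + Ts (T x)) / 4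
  + 2^-1 * sup (range (fun phi : R =>
       `| N (ReOp (rotOp phi T) (rotAdj phi Ts)) ^+ 2
          - N (ImOp (rotOp phi T) (rotAdj phi Ts)) ^+ 2 |))
  <= wN N T Ts ^+ 2.
Proof. by move=> hip hN hT hadj; exact: (main_ineq hip hN hT hadj). Qed.
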